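(* Let $R$ be an $n^2\times n^2$ solution of the QYBE satisfying the Hecke condition $(PR-q)(PR+q^{-1})=0$, and let $\Omega_q(R)$ be the associated quantum exterior algebra. Then the Hopf algebra $U_q^\Omega(H_1,H_2,X^\pm)$ acts covariantly from the right on $\Omega_q(R)$, i.e. there is a right action $\triangleleft$ with $(xy)\triangleleft h=\sum(x\triangleleft h_{(1)})(y\triangleleft h_{(2)})$ for $\Delta_\Omega h=\sum h_{(1)}\otimes h_{(2)}$, given on generators by $x_i\triangleleft H_1=2x_i$, $x_i\triangleleft H_2=0$, $x_i\triangleleft X^+=q^{-1}\mathrm dx_i$, $x_i\triangleleft X^-=0$, and $\mathrm dx_i\triangleleft H_1=0$, $\mathrm dx_i\triangleleft H_2=2\,\mathrm dx_i$, $\mathrm dx_i\triangleleft X^+=0$, $\mathrm dx_i\triangleleft X^-=q\,x_i$.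
   Context: $P$ is the permutation matrix; $R$ has entries $R^a{}_i{}^b{}_j$, repeated indices summed. $\Omega_q(R)$ is the algebra generated by $x_1,\dots,x_n,\mathrm dx_1,\dots,\mathrm dx_n$ with relations $x_ix_j=q^{-1}x_bx_aR^a{}_i{}^b{}_j$, $\mathrm dx_i\,x_j=q\,x_b\,\mathrm dx_aR^a{}_i{}^b{}_j$, $\mathrm dx_i\,\mathrm dx_j=-q\,\mathrm dx_b\,\mathrm dx_aR^a{}_i{}^b{}_j$. Exponentials are formal. $U_q^\Omega(H_1,H_2,X^\pm)$ is the Hopf algebra generated by $H_1,H_2,X^\pm$ with relations $[H_1,H_2]=0$, $[H_1,X^\pm]=\pm2X^\pm$, $[H_2,X^\pm]=\mp2X^\pm$, $[X^+,X^-]=\frac{K_1K_2-K_1^{-1}K_2^{-1}}{q-q^{-1}}$ (where $K_1=q^{H_1/2}$, $K_2=e^{i\frac{\pi}{2}H_2}q^{H_2/2}$), $(X^\pm)^2=0$; counit zero on generators; coproduct $\Delta_\Omega H_i=H_i\otimes1+1\otimes H_i$, $\Delta_\Omega X^+=X^+\otimes q^{-H_2/2}+e^{-i\frac{\pi}{2}H_2}q^{-H_2/2}\otimes X^+$, $\Delta_\Omega X^-=X^-\otimes e^{i\frac{\pi}{2}H_2}q^{(H_1+2H_2)/2}+q^{-H_1/2}\otimes X^-$; antipode $S_\Omega(H_i)=-H_i$, $S_\Omega(X^+)=-qe^{i\frac{\pi}{2}H_2}q^{H_2}X^+$, $S_\Omega(X^-)=qe^{-i\frac{\pi}{2}H_2}q^{-H_2}X^-$.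 *)

(* Defs.v *)
From HB Require Import structures.
From mathcomp Require Import all_boot all_order all_algebra.
Set Implicit Arguments. Unset Strict Implicit. Unset Printing Implicit Defensive.
Import Order.TTheory GRing.Theory Num.Theory.
Local Open Scope ring_scope.

Section QuantumDefs.
Variable C : numClosedFieldType.

Definition mmul (T : finType) (M N : T -> T -> C) (u v : T) : C :=
  \sum_(w : T) M u w * N w v.
Definition idm (T : finType) (u v : T) : C := (u == v)%:R.

Variable n : nat.
(* R is given by its entries: R a i b j = R^a_i^b_j, i.e. the entry of the
   n^2 x n^2 matrix R in row (a,b) and column (i,j). *)
Variable R : 'I_n -> 'I_n -> 'I_n -> 'I_n -> C.

Local Notation T2 := ('I_n * 'I_n)%type.
Local Notation T3 := ('I_n * 'I_n * 'I_n)%type.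

Definition Rmx (u v : T2) : C := R u.1 v.1 u.2 v.2.
Definition Pmx (u v : T2) : C := ((u.1 == v.2) && (u.2 == v.1))%:R.
Definition PRmx : T2 -> T2 -> C := mmul Pmx Rmx.

Definition R12 (u v : T3) : C := R u.1.1 v.1.1 u.1.2 v.1.2 * (u.2 == v.2)%:R.
Definition R13 (u v : T3) : C := R u.1.1 v.1.1 u.2 v.2 * (u.1.2 == v.1.2)%:R.
Definition R23 (u v : T3) : C := (u.1.1 == v.1.1)%:R * R u.1.2 v.1.2 u.2 v.2.

Definition QYBE : Prop :=
  forall u v : T3, mmul (mmul R12 R13) R23 u v = mmul (mmul R23 R13) R12 u v.

Variable q : C.

Definition Hecke : Prop :=
  forall u v : T2,
    mmul (fun a b => PRmx a b - q * idm a b) (fun a b => PRmx a b + q^-1 * idm a b) u v = 0.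

Definition omega_rel (B : algType C) (x dx : 'I_n -> B) : Prop :=
  forall i j : 'I_n,
  [/\ x i * x j = q^-1 *: \sum_(a < n) \sum_(b < n) R a i b j *: (x b * x a),
      dx i * x j = q *: \sum_(a < n) \sum_(b < n) R a i b j *: (x b * dx a) &
      dx i * dx j = - q *: \sum_(a < n) \sum_(b < n) R a i b j *: (dx b * dx a)].

Definition alg_hom (A B : algType C) (f : A -> B) : Prop :=
  linear f /\ monoid_morphism f.

(* (A, x, dx) is the algebra generated by x_i, dx_i subject to omega_rel,
   i.e. it satisfies the universal property of the presented algebra. *)
Definition is_Omega (A : algType C) (x dx : 'I_n -> A) : Prop :=
  omega_rel x dx /\
  forall (B : algType C) (y dy : 'I_n -> B), omega_rel y dy ->
    (exists f : A -> B, alg_hom f /\ forall i, f (x i) = y i /\ f (dx i) = dy i) /\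
    (forall f g : A -> B, alg_hom f -> alg_hom g ->
       (forall i, f (x i) = g (x i) /\ f (dx i) = g (dx i)) -> f =1 g).

Section Action.
Variable A : algType C.
Variables H1 H2 : A -> A.  (* v |-> v <| H1, v |-> v <| H2 *)

Definition weight (v : A) (m1 m2 : int) : Prop :=
  H1 v = m1%:~R *: v /\ H2 v = m2%:~R *: v.

(* H1, H2 act diagonalizably (every element is a finite sum of weight vectors),
   which is what makes the formal exponentials of H1, H2 meaningful *)
Definition wdiag : Prop :=
  forall v : A, exists s : seq (A * (int * int)),
    v = \sum_(p <- s) p.1 /\ forall p, p \in s -> weight p.1 p.2.1 p.2.2.

(* T is the operator f(H1,H2) (functional calculus on weight vectors) *)
Definition funop (f : int -> int -> C) (T : A -> A) : Prop :=
  linear T /\ forall v m1 m2, weight v m1 m2 -> T v = f m1 m2 *: v.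

End Action.

(* s = q^(1/2); the functions giving the formal exponentials on weights (m1,m2) *)
Definition sq : C := sqrtC q.
Definition fa (m1 m2 : int) : C := sq ^ (- m2).
(* e^{-i pi H2/2} q^{-H2/2} *)
Definition fb (m1 m2 : int) : C := 'i ^ (- m2) * sq ^ (- m2).
(* e^{i pi H2/2} q^{(H1+2H2)/2} *)
Definition fc (m1 m2 : int) : C := 'i ^ m2 * sq ^ (m1 + 2 * m2).
Definition fd (m1 m2 : int) : C := sq ^ (- m1).
(* K1 K2 = q^{H1/2} e^{i pi H2/2} q^{H2/2} *)
Definition fK (m1 m2 : int) : C := sq ^ m1 * ('i ^ m2 * sq ^ m2).
(* K1^{-1} K2^{-1} *)
Definition fKi (m1 m2 : int) : C := sq ^ (- m1) * ('i ^ (- m2) * sq ^ (- m2)).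

(* H1, H2, Xp, Xm : A -> A are the maps v |-> v <| H1, etc.  The right action
   convention is v <| (g h) = (v <| g) <| h. *)
Definition covariant_right_action (A : algType C) (x dx : 'I_n -> A)
    (H1 H2 Xp Xm : A -> A) : Prop :=
  [/\ linear H1 /\ linear H2 /\ linear Xp /\ linear Xm,
      wdiag H1 H2 &
      exists Ta Tb Tc Td TK TKi : A -> A,
      [/\ funop H1 H2 fa Ta /\ funop H1 H2 fb Tb /\ funop H1 H2 fc Tc /\
          funop H1 H2 fd Td /\ funop H1 H2 fK TK /\ funop H1 H2 fKi TKi,
        (* relations of U_q^Omega, acting from the right *)
        forall v : A,
          H2 (H1 v) = H1 (H2 v) /\
          Xp (H1 v) - H1 (Xp v) = 2%:R *: Xp v /\
          Xm (H1 v) - H1 (Xm v) = - (2%:R *: Xm v) /\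
          Xp (H2 v) - H2 (Xp v) = - (2%:R *: Xp v) /\
          Xm (H2 v) - H2 (Xm v) = 2%:R *: Xm v /\
          Xm (Xp v) - Xp (Xm v) = (q - q^-1)^-1 *: (TK v - TKi v) /\
          Xp (Xp v) = 0 /\ Xm (Xm v) = 0,
        forall u w : A,
          [/\ H1 (u * w) = H1 u * w + u * H1 w,
              H2 (u * w) = H2 u * w + u * H2 w,
              Xp (u * w) = Xp u * Ta w + Tb u * Xp w &
              Xm (u * w) = Xm u * Tc w + Td u * Xm w] &
        forall i : 'I_n,
          H1 (x i) = 2%:R *: x i /\ H2 (x i) = 0 /\
          Xp (x i) = q^-1 *: dx i /\ Xm (x i) = 0 /\
          H1 (dx i) = 0 /\ H2 (dx i) = 2%:R *: dx i /\
          Xp (dx i) = 0 /\ Xm (dx i) = q *: x i]].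

End QuantumDefs.

(* Main.v *)
Require Import Defs.
From HB Require Import structures.
From mathcomp Require Import all_boot all_order all_algebra.
From mathcomp Require Import ring.
From Stdlib Require Import ClassicalEpsilon.
Set Implicit Arguments. Unset Strict Implicit. Unset Printing Implicit Defensive.
Import Order.TTheory GRing.Theory Num.Theory.
Local Open Scope ring_scope.


Section Sub.
Variables (C : numClosedFieldType) (A : algType C) (P : A -> Prop).
Definition pb : pred A := fun v => if excluded_middle_informative (P v) then true else false.
Lemma pbP v : reflect (P v) (pb v).
Proof. rewrite /pb; case: excluded_middle_informative => h; by constructor. Qed.
Hypotheses (P1 : P 1) (P0 : P 0) (PD : forall u w, P u -> P w -> P (u + w))
  (PZ : forall (c : C) u, P u -> P (c *: u)) (PM : forall u w, P u -> P w -> P (u * w)).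
Lemma pb_closed : GRing.subsemialg_closed pb.
Proof.
split.
- exact/pbP.
- split; first exact/pbP. by move=> u w /pbP pu /pbP pw; apply/pbP; apply: PD.
- by move=> c u /pbP pu; apply/pbP; apply: PZ.
- by move=> u w /pbP pu /pbP pw; apply/pbP; apply: PM.
Qed.
HB.instance Definition _ := GRing.isSubalgClosed.Build C A pb pb_closed.
Definition Ssub := {v : A | pb v}.
HB.instance Definition _ := [isSub of Ssub for @sval A pb].
HB.instance Definition _ := [Choice of Ssub by <:].
HB.instance Definition _ := [SubChoice_isSubAlgebra of Ssub by <:].

Variables (n : nat) (q : C) (R : 'I_n -> 'I_n -> 'I_n -> 'I_n -> C) (x dx : 'I_n -> A).
Hypotheses (Px : forall i, P (x i)) (Pdx : forall i, P (dx i)).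
Lemma val_alg : alg_hom (fun s : Ssub => val s).
Proof. split; first by move=> a u v. by split. Qed.
Lemma id_alg : alg_hom (fun s : A => s).
Proof. split; first by move=> a u v. by split. Qed.
Lemma comp_alg (A1 A2 A3 : algType C) (f : A1 -> A2) (g : A2 -> A3) :
  alg_hom f -> alg_hom g -> alg_hom (g \o f).
Proof.
move=> [lf [f1 fM]] [lg [g1 gM]]; split; first by move=> a u v /=; rewrite lf lg.
by split => [|u v] /=; rewrite ?f1 ?g1 // fM gM.
Qed.
Section AH.
Variables (A1 A2 : algType C) (f : A1 -> A2).
Hypothesis hf : alg_hom f.
Lemma ah0 : f 0 = 0.
Proof.
have h := hf.1 1 0 0; rewrite !scale1r addr0 in h.
have: f 0 + f 0 - f 0 = f 0 - f 0 by rewrite -h.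
by rewrite addrK subrr.
Qed.
Lemma ahD u v : f (u + v) = f u + f v.
Proof. by have := hf.1 1 u v; rewrite !scale1r. Qed.
Lemma ahZ a u : f (a *: u) = a *: f u.
Proof. by have := hf.1 a u 0; rewrite !addr0 ah0 addr0. Qed.
Lemma ah1 : f 1 = 1. Proof. exact: hf.2.1. Qed.
Lemma ahM u v : f (u * v) = f u * f v. Proof. exact: hf.2.2. Qed.
Lemma ah_sum (I : Type) (r : seq I) (F : I -> A1) :
  f (\sum_(i <- r) F i) = \sum_(i <- r) f (F i).
Proof. exact: (big_morph f ahD ah0). Qed.
Lemma ahN u : f (- u) = - f u.
Proof. by rewrite -scaleN1r ahZ scaleN1r. Qed.
Lemma ah_rel m (c : 'I_m -> 'I_m -> C) (a0 : C) (u w : 'I_m -> A1) :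
  f (a0 *: \sum_(a < m) \sum_(b < m) c a b *: (u b * w a)) =
  a0 *: \sum_(a < m) \sum_(b < m) c a b *: (f (u b) * f (w a)).
Proof.
rewrite ahZ ah_sum; congr (_ *: _); apply: eq_bigr => a _.
rewrite ah_sum; apply: eq_bigr => b _. by rewrite ahZ ahM.
Qed.
End AH.
Lemma Omega_ind : is_Omega R q x dx -> forall v, P v.
Proof.
move=> [rel univ].
pose y i : Ssub := exist _ (x i) (introT (pbP _) (Px i)).
pose dy i : Ssub := exist _ (dx i) (introT (pbP _) (Pdx i)).
have hrel : omega_rel R q y dy.
  move=> i j; have [r1 r2 r3] := rel i j.
  by split; apply: val_inj; rewrite (ah_rel val_alg) /= ?r1 ?r2 ?r3.
have [[f [hf fgen]] _] := univ Ssub y dy hrel.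
have [_ uniq] := univ A x dx rel.
move=> v.
have := uniq (fun s => val (f s)) (fun s => s) (comp_alg hf val_alg) id_alg.
move=> /(_ _ v) <-.
  by apply/pbP; exact: valP.
by move=> i; have [-> ->] := fgen i.
Qed.
End Sub.

Section Tri.
Variables (C : numClosedFieldType) (A : algType C).
Definition tri := (A * A * A)%type.
HB.instance Definition _ := GRing.Lmodule.copy tri (A * A * A)%type.
Definition tmul (u v : tri) : tri := (u.1.1 * v.1.1, u.1.1 * v.1.2 + u.1.2 * v.2, u.2 * v.2).
Definition tone : tri := (1, 0, 1).
Lemma tmulA : associative tmul.
Proof.
move=> [[a b] c] [[a' b'] c'] [[a'' b''] c'']; rewrite /tmul /=.
by rewrite !mulrA !mulrDr !mulrDl !mulrA addrA.
Qed.
Lemma tmul1 : left_id tone tmul.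
Proof. by move=> [[a b] c]; rewrite /tmul /= !mul1r mul0r addr0. Qed.
Lemma tmulr1 : right_id tone tmul.
Proof. by move=> [[a b] c]; rewrite /tmul /= !mulr1 mulr0 add0r. Qed.
Lemma tmulDl : left_distributive tmul +%R.
Proof.
move=> [[a b] c] [[a' b'] c'] [[a'' b''] c'']; rewrite /tmul /=.
congr (_, _, _); rewrite ?mulrDl //.
by rewrite addrACA.
Qed.
Lemma tmulDr : right_distributive tmul +%R.
Proof.
move=> [[a b] c] [[a' b'] c'] [[a'' b''] c'']; rewrite /tmul /=.
congr (_, _, _); rewrite ?mulrDr //.
by rewrite addrACA.
Qed.
Lemma tone_neq0 : tone != 0.
Proof. apply/eqP => /(congr1 (fun t : tri => t.2)) /= /eqP; by rewrite oner_eq0. Qed.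
HB.instance Definition _ := GRing.Zmodule_isNzRing.Build tri tmulA tmul1 tmulr1 tmulDl tmulDr tone_neq0.
Lemma tscaleE (a : C) (u : tri) : a *: u = (a *: u.1.1, a *: u.1.2, a *: u.2) :> tri.
Proof. by case: u => [[? ?] ?]. Qed.
Lemma tmulE (u v : tri) : u * v = tmul u v.
Proof. by []. Qed.
Lemma taddE (u v : tri) : u + v = (u.1.1 + v.1.1, u.1.2 + v.1.2, u.2 + v.2) :> tri.
Proof. by case: u => [[? ?] ?]; case: v => [[? ?] ?]. Qed.
Lemma tscaleAl (a : C) (u v : tri) : a *: (u * v : tri) = ((a *: u : tri) * v : tri).
Proof.
rewrite !tmulE !tscaleE /tmul /=.
by rewrite scalerDr !scalerAl.
Qed.
HB.instance Definition _ := GRing.Lmodule_isLalgebra.Build C tri tscaleAl.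
Lemma tscaleAr (a : C) (u v : tri) : a *: (u * v : tri) = (u * (a *: v : tri) : tri).
Proof.
rewrite !tmulE !tscaleE /tmul /=.
by rewrite scalerDr !scalerAr.
Qed.
HB.instance Definition _ := GRing.Lalgebra_isAlgebra.Build C tri tscaleAr.
End Tri.

Section Scal.
Variables (C : numClosedFieldType) (q : C).
Hypothesis hq0 : q != 0.
Lemma sq_neq0 : sq q != 0.
Proof. apply: contra hq0 => /eqP h; rewrite /sq in h; by rewrite -(sqrtCK q) h expr0n. Qed.
Lemma i_neq0 : ('i : C) != 0.
Proof. by rewrite neq0Ci. Qed.
Lemma sq2 : sq q ^+ 2 = q. Proof. exact: sqrtCK. Qed.
Lemma fa_mul k l k' l' : fa q (k + k') (l + l') = fa q k l * fa q k' l'.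
Proof. by rewrite /fa opprD expfzDr // sq_neq0. Qed.
Lemma fb_mul k l k' l' : fb q (k + k') (l + l') = fb q k l * fb q k' l'.
Proof. rewrite /fb opprD !expfzDr ?sq_neq0 ?i_neq0 //; ring. Qed.
Lemma fc_mul k l k' l' : fc q (k + k') (l + l') = fc q k l * fc q k' l'.
Proof.
rewrite /fc.
have -> : k + k' + 2 * (l + l') = (k + 2 * l) + (k' + 2 * l') by ring.
rewrite !expfzDr ?sq_neq0 ?i_neq0 //; ring.
Qed.
Lemma fd_mul k l k' l' : fd q (k + k') (l + l') = fd q k l * fd q k' l'.
Proof. by rewrite /fd opprD expfzDr // sq_neq0. Qed.
Lemma fK_mul k l k' l' : fK q (k + k') (l + l') = fK q k l * fK q k' l'.
Proof. rewrite /fK !expfzDr ?sq_neq0 ?i_neq0 //; ring. Qed.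
Lemma fKi_mul k l k' l' : fKi q (k + k') (l + l') = fKi q k l * fKi q k' l'.
Proof. rewrite /fKi !opprD !expfzDr ?sq_neq0 ?i_neq0 //; ring. Qed.
Lemma ezN2 (x : C) : x ^ (-2) = (x ^+ 2)^-1. Proof. by []. Qed.
Lemma ez2 (x : C) : x ^ 2 = x ^+ 2. Proof. by []. Qed.
Lemma ez4 (x : C) : x ^ 4 = x ^+ 2 * x ^+ 2. Proof. by rewrite -exprD. Qed.
Lemma ez0 (x : C) : x ^ 0 = 1. Proof. by []. Qed.
Lemma i2 : ('i : C) ^+ 2 = -1. Proof. exact: sqrCi. Qed.
Definition fvals := (ezN2, ez2, ez4, ez0, i2, sq2).
Lemma fa20 : fa q 2 0 = 1. Proof. by rewrite /fa oppr0 ez0. Qed.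
Lemma fa02 : fa q 0 2 = q^-1. Proof. by rewrite /fa -invr_expz ez2 sq2. Qed.
Lemma fb20 : fb q 2 0 = 1. Proof. by rewrite /fb oppr0 ez0 mulr1. Qed.
Lemma fb02 : fb q 0 2 = - q^-1. Proof. by rewrite /fb -!invr_expz !ez2 i2 sq2 invrN1 mulN1r. Qed.
Lemma fc20 : fc q 2 0 = q. Proof. by rewrite /fc mulr0 addr0 !fvals mul1r. Qed.
Lemma fc02 : fc q 0 2 = - q ^+ 2. Proof. rewrite /fc add0r. have -> : (2 * 2 : int) = 4 by []. by rewrite !fvals mulN1r. Qed.
Lemma fd20 : fd q 2 0 = q^-1. Proof. by rewrite /fd -invr_expz ez2 sq2. Qed.
Lemma fd02 : fd q 0 2 = 1. Proof. by rewrite /fd oppr0 ez0. Qed.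
Lemma fa00 : fa q 0 0 = 1. Proof. by rewrite /fa oppr0 ez0. Qed.
Lemma fb00 : fb q 0 0 = 1. Proof. by rewrite /fb oppr0 ez0 mulr1. Qed.
Lemma fc00 : fc q 0 0 = 1. Proof. by rewrite /fc mulr0 addr0 ez0 mulr1. Qed.
Lemma fd00 : fd q 0 0 = 1. Proof. by rewrite /fd oppr0 ez0. Qed.
Lemma fK00 : fK q 0 0 = 1. Proof. by rewrite /fK !ez0 !mulr1. Qed.
Lemma fKi00 : fKi q 0 0 = 1. Proof. by rewrite /fKi oppr0 !ez0 !mulr1. Qed.
Lemma faM2 : fa q (-2) 2 = q^-1. Proof. exact: fa02. Qed.
Lemma fa2M : fa q 2 (-2) = q. Proof. by rewrite /fa opprK ez2 sq2. Qed.
Lemma fbM2 : fb q (-2) 2 = - q^-1. Proof. exact: fb02. Qed.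
Lemma fb2M : fb q 2 (-2) = - q. Proof. by rewrite /fb opprK !ez2 sq2 i2 mulN1r. Qed.
Lemma fcM2 : fc q (-2) 2 = - q. Proof.
rewrite /fc. have -> : (-2 + 2 * 2 : int) = 2 by []. by rewrite !ez2 sq2 i2 mulN1r. Qed.
Lemma fc2M : fc q 2 (-2) = - q^-1. Proof.
rewrite /fc. have -> : (2 + 2 * -2 : int) = -2 by []. by rewrite -!invr_expz !ez2 sq2 i2 invrN1 mulN1r. Qed.
Lemma fdM2 : fd q (-2) 2 = q. Proof. by rewrite /fd opprK ez2 sq2. Qed.
Lemma fd2M : fd q 2 (-2) = q^-1. Proof. exact: fd20. Qed.
Lemma fK20 : fK q 2 0 = q. Proof. by rewrite /fK ez0 !mulr1 ez2 sq2. Qed.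
Lemma fK02 : fK q 0 2 = - q. Proof. by rewrite /fK ez0 mul1r !ez2 sq2 i2 mulN1r. Qed.
Lemma fKi20 : fKi q 2 0 = q^-1. Proof. by rewrite /fKi oppr0 ez0 !mulr1 -invr_expz ez2 sq2. Qed.
Lemma fKi02 : fKi q 0 2 = - q^-1. Proof. by rewrite /fKi oppr0 ez0 mul1r -!invr_expz !ez2 sq2 i2 invrN1 mulN1r. Qed.
Lemma fac k l : fa q k l * fc q k l = fK q k l.
Proof.
rewrite /fa /fc /fK.
have -> : k + 2 * l = k + l + l by ring.
rewrite !expfzDr ?sq_neq0 // -invr_expz. field. by rewrite expfz_neq0 // sq_neq0.
Qed.
Lemma fbd k l : fb q k l * fd q k l = fKi q k l.
Proof. rewrite /fb /fd /fKi; ring. Qed.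
End Scal.

Section TriP.
Variables (C : numClosedFieldType) (A : algType C).
Definition p11 (u : tri A) : A := u.1.1.
Definition p12 (u : tri A) : A := u.1.2.
Definition p22 (u : tri A) : A := u.2.
Lemma p11_alg : alg_hom p11.
Proof. split; first by move=> a u v; rewrite /p11 taddE tscaleE. by split. Qed.
Lemma p22_alg : alg_hom p22.
Proof. split; first by move=> a u v; rewrite /p22 taddE tscaleE. by split. Qed.
Lemma p12_lin : linear p12.
Proof. by move=> a u v; rewrite /p12 taddE tscaleE. Qed.
Lemma tri_eq (u v : tri A) : p11 u = p11 v -> p12 u = p12 v -> p22 u = p22 v -> u = v.
Proof. by case: u => [[? ?] ?]; case: v => [[? ?] ?]; rewrite /p11 /p12 /p22 /= => -> -> ->. Qed.
End TriP.

Section Hk.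
Variables (C : numClosedFieldType) (n : nat) (q : C) (R : 'I_n -> 'I_n -> 'I_n -> 'I_n -> C).
Lemma sum_idm_r (F : 'I_n * 'I_n -> C) v : \sum_w F w * idm C w v = F v.
Proof.
rewrite (bigD1 v) //= /idm eqxx mulr1 big1 ?addr0 // => w /negbTE ->; by rewrite mulr0.
Qed.
Lemma sum_idm_l (F : 'I_n * 'I_n -> C) u : \sum_w idm C u w * F w = F u.
Proof.
rewrite (bigD1 u) //= /idm eqxx mul1r big1 ?addr0 // => w; rewrite eq_sym => /negbTE ->; by rewrite mul0r.
Qed.
Lemma PR_E u w : PRmx R u w = R u.2 w.1 u.1 w.2.
Proof.
rewrite /PRmx /mmul (bigD1 (u.2, u.1)) //= /Pmx /= !eqxx mul1r big1 ?addr0 //.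
move=> [z1 z2] /=; rewrite xpair_eqE negb_and => hz.
by case/orP: hz => h; [rewrite (eq_sym u.2) (negbTE h) andbF | rewrite (eq_sym u.1) (negbTE h)]; rewrite mul0r.
Qed.
Lemma hecke_sc : q != 0 -> Hecke R q -> forall d c i j : 'I_n,
  \sum_(a < n) \sum_(b < n) R c b d a * R a i b j =
  (q - q^-1) * R c i d j + ((d == i) && (c == j))%:R.
Proof.
move=> hq0 Hk d c i j.
have h := Hk (d, c) (i, j); rewrite /mmul in h.
set u := (d, c) in h; set v := (i, j) in h.
rewrite (eq_bigr (fun w => PRmx R u w * PRmx R w v + (PRmx R u w * idm C w v) * q^-1
   - q * (idm C u w * PRmx R w v) - (q * q^-1) * (idm C u w * idm C w v))) in h; last first.
  by move=> w _; ring.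
rewrite !sumrB big_split /= -mulr_suml -!mulr_sumr !sum_idm_r sum_idm_l mulfV // mul1r in h.
rewrite /idm /= xpair_eqE in h.
have -> : \sum_(a < n) \sum_(b < n) R c b d a * R a i b j = \sum_w PRmx R u w * PRmx R w v.
  rewrite -(pair_bigA _ (fun w1 w2 => PRmx R u (w1, w2) * PRmx R (w1, w2) v)) /= exchange_big /=.
  by apply: eq_bigr => a _; apply: eq_bigr => b _; rewrite !PR_E.
rewrite PR_E /= in h.
apply/eqP; rewrite -subr_eq0 -[X in _ == X]h; apply/eqP; ring.
Qed.
Lemma hecke_vec (V : lmodType C) (Z : 'I_n -> 'I_n -> V) : q != 0 -> Hecke R q ->
  forall i j : 'I_n,
  \sum_(a < n) \sum_(b < n) R a i b j *: (\sum_(c < n) \sum_(d < n) R c b d a *: Z d c) =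
  Z i j + (q - q^-1) *: \sum_(a < n) \sum_(b < n) R a i b j *: Z b a.
Proof.
move=> hq0 Hk i j.
transitivity (\sum_(a < n) \sum_(b < n) \sum_(c < n) \sum_(d < n) (R a i b j * R c b d a) *: Z d c).
  apply: eq_bigr => a _; apply: eq_bigr => b _; rewrite scaler_sumr.
  apply: eq_bigr => c _; rewrite scaler_sumr; apply: eq_bigr => d _; by rewrite scalerA.
transitivity (\sum_(c < n) \sum_(d < n) (\sum_(a < n) \sum_(b < n) R c b d a * R a i b j) *: Z d c).
  under eq_bigr => a _ do rewrite exchange_big /=.
  rewrite exchange_big /=; apply: eq_bigr => c _.
  under eq_bigr => a _ do rewrite exchange_big /=.
  rewrite exchange_big /=.
  apply: eq_bigr => d _; rewrite scaler_suml.
  apply: eq_bigr => a _; rewrite scaler_suml; apply: eq_bigr => b _; by rewrite mulrC.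
under eq_bigr => c _ do under eq_bigr => d _ do rewrite (hecke_sc hq0 Hk) scalerDl.
under eq_bigr => c _ do rewrite big_split /=.
rewrite big_split /= addrC; congr (_ + _).
  rewrite (bigD1 j) //= (bigD1 i) //= !eqxx scale1r big1 ?addr0.
    rewrite big1 ?addr0 // => c /negbTE hc; apply: big1 => d _; by rewrite hc andbF scale0r.
  by move=> d /negbTE hd; rewrite hd scale0r.
rewrite scaler_sumr; apply: eq_bigr => c _; rewrite scaler_sumr; apply: eq_bigr => d _.
by rewrite scalerA.
Qed.
End Hk.
Section Gen.
Variables (C : numClosedFieldType) (A : algType C).
Lemma scalerMM (a b : C) (u w : A) : (a *: u) * (b *: w) = (a * b) *: (u * w).
Proof. by rewrite -scalerAl -scalerAr scalerA. Qed.
Lemma sum2Z m (c : 'I_m -> 'I_m -> C) (k : C) (t : 'I_m -> 'I_m -> A) :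
  \sum_(a < m) \sum_(b < m) c a b *: (k *: t a b) = k *: \sum_(a < m) \sum_(b < m) c a b *: t a b.
Proof.
rewrite scaler_sumr; apply: eq_bigr => a _; rewrite scaler_sumr; apply: eq_bigr => b _.
by rewrite !scalerA mulrC.
Qed.
Lemma sum2D m (c : 'I_m -> 'I_m -> C) (t t' : 'I_m -> 'I_m -> A) :
  \sum_(a < m) \sum_(b < m) c a b *: (t a b + t' a b) =
  \sum_(a < m) \sum_(b < m) c a b *: t a b + \sum_(a < m) \sum_(b < m) c a b *: t' a b.
Proof.
rewrite -big_split; apply: eq_bigr => a _; rewrite -big_split; apply: eq_bigr => b _.
by rewrite scalerDr.
Qed.
Definition lc (ps : A * A) (a b : C) := a *: ps.1 + b *: ps.2.
Lemma lcD ps a b a' b' : lc ps a b + lc ps a' b' = lc ps (a + a') (b + b').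
Proof. rewrite /lc !scalerDl. by rewrite addrACA. Qed.
Lemma lcZ ps k a b : k *: lc ps a b = lc ps (k * a) (k * b).
Proof. by rewrite /lc scalerDr !scalerA. Qed.
Lemma lcN ps a b : - lc ps a b = lc ps (- a) (- b).
Proof. by rewrite /lc opprD !scaleNr. Qed.
Lemma lc_ex (P S : A) : exists ps, P = lc ps 1 0 /\ S = lc ps 0 1.
Proof. by exists (P, S); rewrite /lc /= !scale1r !scale0r addr0 add0r. Qed.
Definition lc5 (ps : A * A * A * A * A) (a b c d e : C) :=
  a *: ps.1.1.1.1 + (b *: ps.1.1.1.2 + (c *: ps.1.1.2 + (d *: ps.1.2 + e *: ps.2))).
Lemma lc5D ps a b c d e a' b' c' d' e' :
  lc5 ps a b c d e + lc5 ps a' b' c' d' e' = lc5 ps (a + a') (b + b') (c + c') (d + d') (e + e').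
Proof. by rewrite /lc5 !scalerDl; do 4 (rewrite addrACA; congr (_ + _)). Qed.
Lemma lc5Z ps k a b c d e : k *: lc5 ps a b c d e = lc5 ps (k * a) (k * b) (k * c) (k * d) (k * e).
Proof. by rewrite /lc5 !scalerDr !scalerA. Qed.
Lemma lc5N ps a b c d e : - lc5 ps a b c d e = lc5 ps (- a) (- b) (- c) (- d) (- e).
Proof. by rewrite /lc5 !opprD !scaleNr. Qed.
Lemma lc5_ex (t1 t2 t3 t4 t5 : A) : exists ps,
  [/\ t1 = lc5 ps 1 0 0 0 0, t2 = lc5 ps 0 1 0 0 0, t3 = lc5 ps 0 0 1 0 0,
      t4 = lc5 ps 0 0 0 1 0 & t5 = lc5 ps 0 0 0 0 1].
Proof.
exists (t1, t2, t3, t4, t5); rewrite /lc5 /= !scale1r !scale0r.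
by split; rewrite ?addr0 ?add0r.
Qed.
End Gen.
Ltac lcsolve P S :=
  let ps := fresh "ps" in let eP := fresh "eP" in let eS := fresh "eS" in
  have [ps [eP eS]] := lc_ex P S; rewrite ?eP ?eS; clear eP eS;
  rewrite ?(lcD, lcZ, lcN); congr lc.

Ltac lc5solve t1 t2 t3 t4 t5 :=
  let ps := fresh "ps" in let e1 := fresh "e" in let e2 := fresh "e" in
  let e3 := fresh "e" in let e4 := fresh "e" in let e5 := fresh "e" in
  have [ps [e1 e2 e3 e4 e5]] := lc5_ex t1 t2 t3 t4 t5; rewrite ?e1 ?e2 ?e3 ?e4 ?e5; clear e1 e2 e3 e4 e5;
  rewrite ?(lc5D, lc5Z, lc5N); congr lc5.

Section Lin.
Variables (C : numClosedFieldType) (U V : lmodType C) (f : U -> V).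
Hypothesis hf : linear f.
Lemma lin0 : f 0 = 0.
Proof.
have h := hf 1 0 0; rewrite !scale1r addr0 in h.
have: f 0 + f 0 - f 0 = f 0 - f 0 by rewrite -h.
by rewrite addrK subrr.
Qed.
Lemma linD u v : f (u + v) = f u + f v.
Proof. by have := hf 1 u v; rewrite !scale1r. Qed.
Lemma linZ a u : f (a *: u) = a *: f u.
Proof. by have := hf a u 0; rewrite !addr0 lin0 addr0. Qed.
Lemma lin_sum (I : Type) (r : seq I) (F : I -> U) :
  f (\sum_(i <- r) F i) = \sum_(i <- r) f (F i).
Proof. exact: (big_morph f linD lin0). Qed.
Lemma linN u : f (- u) = - f u.
Proof. by rewrite -scaleN1r linZ scaleN1r. Qed.
Lemma linB u v : f (u - v) = f u - f v.
Proof. by rewrite linD linN. Qed.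
Lemma lin_rel m (c : 'I_m -> 'I_m -> C) (a0 : C) (t : 'I_m -> 'I_m -> U) :
  f (a0 *: \sum_(a < m) \sum_(b < m) c a b *: t a b) =
  a0 *: \sum_(a < m) \sum_(b < m) c a b *: f (t a b).
Proof.
rewrite linZ lin_sum; congr (_ *: _); apply: eq_bigr => a _.
rewrite lin_sum; apply: eq_bigr => b _. by rewrite linZ.
Qed.
End Lin.

Section Twisted.
Variables (C : numClosedFieldType) (n : nat) (q : C) (R : 'I_n -> 'I_n -> 'I_n -> 'I_n -> C).
Variables (A : algType C) (x dx : 'I_n -> A).
Hypothesis HO : is_Omega R q x dx.

Lemma rel_scale2 m (c : 'I_m -> 'I_m -> C) (a0 k1 k2 : C) (u w : 'I_m -> A) :
  a0 *: \sum_(a < m) \sum_(b < m) c a b *: ((k1 *: u b) * (k2 *: w a)) =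
  (k1 * k2) *: (a0 *: \sum_(a < m) \sum_(b < m) c a b *: (u b * w a)).
Proof.
under eq_bigr => a _ do under eq_bigr => b _ do rewrite scalerMM.
by rewrite sum2Z !scalerA mulrC.
Qed.

Lemma scal_hom (lam mu : C) : exists T : A -> A, alg_hom T /\
  forall i, T (x i) = lam *: x i /\ T (dx i) = mu *: dx i.
Proof.
have [rel univ] := HO.
have h : omega_rel R q (fun i => lam *: x i) (fun i => mu *: dx i).
  move=> i j; have [r1 r2 r3] := rel i j.
  split; rewrite rel_scale2 scalerMM; [by rewrite r1 | by rewrite r2 mulrC | by rewrite r3].
by have [[f [hf fg]] _] := univ A _ _ h; exists f.
Qed.

Lemma twisted (Tl Tr : A -> A) (lx ldx rx rdx : C) (gx gdx : 'I_n -> A) :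
  alg_hom Tl -> alg_hom Tr ->
  (forall i, Tl (x i) = lx *: x i /\ Tl (dx i) = ldx *: dx i) ->
  (forall i, Tr (x i) = rx *: x i /\ Tr (dx i) = rdx *: dx i) ->
  (forall i j, (lx *: x i) * gx j + gx i * (rx *: x j) =
     q^-1 *: \sum_(a < n) \sum_(b < n) R a i b j *: ((lx *: x b) * gx a + gx b * (rx *: x a))) ->
  (forall i j, (ldx *: dx i) * gx j + gdx i * (rx *: x j) =
     q *: \sum_(a < n) \sum_(b < n) R a i b j *: ((lx *: x b) * gdx a + gx b * (rdx *: dx a))) ->
  (forall i j, (ldx *: dx i) * gdx j + gdx i * (rdx *: dx j) =
     - q *: \sum_(a < n) \sum_(b < n) R a i b j *: ((ldx *: dx b) * gdx a + gdx b * (rdx *: dx a))) ->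
  exists D : A -> A, linear D /\
    (forall u w, D (u * w) = D u * Tr w + Tl u * D w) /\
    (forall i, D (x i) = gx i /\ D (dx i) = gdx i).
Proof.
move=> hl hr hTl hTr e1 e2 e3.
have [rel univ] := HO.
pose y i : tri A := (lx *: x i, gx i, rx *: x i).
pose dy i : tri A := (ldx *: dx i, gdx i, rdx *: dx i).
have hrel : omega_rel R q y dy.
  move=> i j; have [r1 r2 r3] := rel i j.
  split; apply: tri_eq.
  - by rewrite (ah_rel (p11_alg A)) /p11 /y /dy tmulE /= rel_scale2 scalerMM r1.
  - by rewrite (lin_rel (@p12_lin _ A)) /p12 /y /dy !tmulE /= e1.
  - by rewrite (ah_rel (p22_alg A)) /p22 /y /dy tmulE /= rel_scale2 scalerMM r1.
  - by rewrite (ah_rel (p11_alg A)) /p11 /y /dy tmulE /= rel_scale2 scalerMM r2 mulrC.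
  - by rewrite (lin_rel (@p12_lin _ A)) /p12 /y /dy !tmulE /= e2.
  - by rewrite (ah_rel (p22_alg A)) /p22 /y /dy tmulE /= rel_scale2 scalerMM r2 mulrC.
  - by rewrite (ah_rel (p11_alg A)) /p11 /y /dy tmulE /= rel_scale2 scalerMM r3.
  - by rewrite (lin_rel (@p12_lin _ A)) /p12 /y /dy !tmulE /= e3.
  - by rewrite (ah_rel (p22_alg A)) /p22 /y /dy tmulE /= rel_scale2 scalerMM r3.
have [[phi [hphi phig]] _] := univ (tri A) y dy hrel.
have [_ uniq] := univ A x dx rel.
have E11 : forall u, p11 (phi u) = Tl u.
  apply: (uniq _ _ (comp_alg hphi (p11_alg A)) hl) => i /=.
  by have [-> ->] := phig i; have [-> ->] := hTl i.
have E22 : forall u, p22 (phi u) = Tr u.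
  apply: (uniq _ _ (comp_alg hphi (p22_alg A)) hr) => i /=.
  by have [-> ->] := phig i; have [-> ->] := hTr i.
exists (fun u => p12 (phi u)); split; last split.
- by move=> a u v; rewrite (ahD hphi) (ahZ hphi) (@p12_lin _ A).
- move=> u w; rewrite (ahM hphi) -E11 -E22.
  by case: (phi u) => [[? ?] ?]; case: (phi w) => [[? ?] ?]; rewrite /p11 /p12 /p22 /= addrC.
- by move=> i; have [-> ->] := phig i.
Qed.
End Twisted.

Section Chk.
Variables (C : numClosedFieldType) (n : nat) (q : C) (R : 'I_n -> 'I_n -> 'I_n -> 'I_n -> C).
Variables (A : algType C) (x dx : 'I_n -> A).
Hypotheses (hq0 : q != 0) (Hk : Hecke R q) (rel : omega_rel R q x dx).
Let r1 i j := let: And3 h _ _ := rel i j in h.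
Let r2 i j := let: And3 _ h _ := rel i j in h.
Let r3 i j := let: And3 _ _ h := rel i j in h.

Lemma eXp1 i j : (1 *: x i) * (q^-1 *: dx j) + (q^-1 *: dx i) * (1 *: x j) =
  q^-1 *: \sum_(a < n) \sum_(b < n) R a i b j *: ((1 *: x b) * (q^-1 *: dx a) + (q^-1 *: dx b) * (1 *: x a)).
Proof.
under eq_bigr => a _ do under eq_bigr => b _ do rewrite !scalerMM !mul1r !mulr1 -scalerDr r2.
rewrite !scalerMM !mul1r !mulr1 -scalerDr [dx i * x j]r2 sum2Z sum2D sum2Z.
rewrite (hecke_vec (fun d c => x d * dx c) hq0 Hk) /=.
set P := x i * dx j; set S := \sum_(a < n) \sum_(b < n) _.
lcsolve P S; by field; rewrite ?hq0.
Qed.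
Lemma sum0 (c : 'I_n -> 'I_n -> C) (a0 : C) : a0 *: \sum_(a < n) \sum_(b < n) c a b *: (0 : A) = 0.
Proof. rewrite big1 ?scaler0 // => a _; by rewrite big1 // => b _; rewrite scaler0. Qed.

Lemma eXp2 i j : (- q^-1 *: dx i) * (q^-1 *: dx j) + 0 * (1 *: x j) =
  q *: \sum_(a < n) \sum_(b < n) R a i b j *: ((1 *: x b) * 0 + (q^-1 *: dx b) * (q^-1 *: dx a)).
Proof.
under eq_bigr => a _ do under eq_bigr => b _ do rewrite mulr0 add0r scalerMM.
rewrite mul0r addr0 scalerMM sum2Z r3.
set S := \sum_(a < n) \sum_(b < n) _.
rewrite !scalerA; congr (_ *: _); by field; rewrite ?hq0.
Qed.
Lemma eXp3 i j : (- q^-1 *: dx i) * 0 + 0 * (q^-1 *: dx j) =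
  - q *: \sum_(a < n) \sum_(b < n) R a i b j *: ((- q^-1 *: dx b) * 0 + 0 * (q^-1 *: dx a)).
Proof.
under eq_bigr => a _ do under eq_bigr => b _ do rewrite mulr0 mul0r addr0.
by rewrite mulr0 mul0r addr0 sum0.
Qed.
Lemma eXm1 i j : (q^-1 *: x i) * 0 + 0 * (q *: x j) =
  q^-1 *: \sum_(a < n) \sum_(b < n) R a i b j *: ((q^-1 *: x b) * 0 + 0 * (q *: x a)).
Proof.
under eq_bigr => a _ do under eq_bigr => b _ do rewrite mulr0 mul0r addr0.
by rewrite mulr0 mul0r addr0 sum0.
Qed.
Lemma eXm2 i j : (1 *: dx i) * 0 + (q *: x i) * (q *: x j) =
  q *: \sum_(a < n) \sum_(b < n) R a i b j *: ((q^-1 *: x b) * (q *: x a) + 0 * (- q ^+ 2 *: dx a)).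
Proof.
under eq_bigr => a _ do under eq_bigr => b _ do rewrite mul0r addr0 scalerMM.
rewrite mulr0 add0r scalerMM sum2Z r1.
rewrite !scalerA; congr (_ *: _); by field; rewrite ?hq0.
Qed.
Lemma eXm3 i j : (1 *: dx i) * (q *: x j) + (q *: x i) * (- q ^+ 2 *: dx j) =
  - q *: \sum_(a < n) \sum_(b < n) R a i b j *: ((1 *: dx b) * (q *: x a) + (q *: x b) * (- q ^+ 2 *: dx a)).
Proof.
under eq_bigr => a _ do under eq_bigr => b _ do rewrite !scalerMM r2.
rewrite !scalerMM [dx i * x j]r2 sum2D !sum2Z.
rewrite (hecke_vec (fun d c => x d * dx c) hq0 Hk) /=.
set P := x i * dx j; set S := \sum_(a < n) \sum_(b < n) _.
lcsolve P S; by field; rewrite ?hq0.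
Qed.
Lemma eH1 (al be : C) i j : (1 *: x i) * (al *: x j) + (al *: x i) * (1 *: x j) =
  q^-1 *: \sum_(a < n) \sum_(b < n) R a i b j *: ((1 *: x b) * (al *: x a) + (al *: x b) * (1 *: x a)).
Proof.
under eq_bigr => a _ do under eq_bigr => b _ do rewrite !scalerMM -scalerDl.
by rewrite !scalerMM -scalerDl sum2Z r1 !scalerA mulrC.
Qed.
Lemma eH2 (al be : C) i j : (1 *: dx i) * (al *: x j) + (be *: dx i) * (1 *: x j) =
  q *: \sum_(a < n) \sum_(b < n) R a i b j *: ((1 *: x b) * (be *: dx a) + (al *: x b) * (1 *: dx a)).
Proof.
under eq_bigr => a _ do under eq_bigr => b _ do rewrite !scalerMM -scalerDl.
by rewrite !scalerMM -scalerDl sum2Z r2 !scalerA; congr (_ *: _); ring.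
Qed.
Lemma eH3 (al be : C) i j : (1 *: dx i) * (be *: dx j) + (be *: dx i) * (1 *: dx j) =
  - q *: \sum_(a < n) \sum_(b < n) R a i b j *: ((1 *: dx b) * (be *: dx a) + (be *: dx b) * (1 *: dx a)).
Proof.
under eq_bigr => a _ do under eq_bigr => b _ do rewrite !scalerMM -scalerDl.
by rewrite !scalerMM -scalerDl sum2Z r3 !scalerA mulrC.
Qed.
End Chk.

Section Eig.
Variables (C : numClosedFieldType) (V : lmodType C) (H : V -> V).
Hypothesis hH : linear H.
Variables (I : eqType) (ev : I -> C) (m : C).
Lemma eig0 (s : seq I) : forall vec : I -> V,
  (forall p, p \in s -> H (vec p) = ev p *: vec p /\ ev p != m) ->
  H (\sum_(p <- s) vec p) = m *: \sum_(p <- s) vec p -> \sum_(p <- s) vec p = 0.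
Proof.
elim: s => [|p0 s IH] vec hs hv; first by rewrite big_nil.
rewrite big_cons in hv *.
set u := vec p0 + _ in hv *.
have [h0 hm0] := hs p0 (mem_head _ _).
have sub : forall p, p \in s -> p \in p0 :: s by move=> p ps; rewrite inE ps orbT.
pose vec' p := (ev p - ev p0) *: vec p.
have hs' : forall p, p \in s -> H (vec' p) = ev p *: vec' p /\ ev p != m.
  move=> p ps; have [h1 h2] := hs p (sub p ps).
  by rewrite /vec' (linZ hH) h1 !scalerA mulrC.
have e : \sum_(p <- s) vec' p = (m - ev p0) *: u.
  rewrite /vec'; under eq_bigr => p _ do rewrite scalerBl.
  rewrite sumrB -scaler_sumr.
  have -> : \sum_(i <- s) ev i *: vec i = H (\sum_(p <- s) vec p).
    rewrite (lin_sum hH) big_seq_cond [RHS]big_seq_cond; apply: eq_bigr => p /andP [ps _].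
    by have [-> _] := hs p (sub p ps).
  have -> : H (\sum_(p <- s) vec p) = H u - H (vec p0) by rewrite /u (linD hH) addrC addKr.
  rewrite hv h0 /u; rewrite scalerBl scalerDr; set a := vec p0; set b := \sum_(_ <- _) _.
  rewrite scalerDr; rewrite opprD addrA; congr (_ - _).
have := IH vec' hs'.
rewrite e (linZ hH) hv scalerA mulrC -scalerA => /(_ erefl) /eqP.
by rewrite scaler_eq0 subr_eq0 eq_sym (negbTE hm0) /= => /eqP.
Qed.
Lemma eig_filter (s : seq I) (vec : I -> V) :
  (forall p, p \in s -> H (vec p) = ev p *: vec p) ->
  H (\sum_(p <- s) vec p) = m *: \sum_(p <- s) vec p ->
  \sum_(p <- s) vec p = \sum_(p <- s | ev p == m) vec p.
Proof.
move=> hs hv.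
rewrite [LHS](bigID (fun p => ev p == m)) /= -[RHS]addr0; congr (_ + _).
rewrite -big_filter; apply: eig0.
  move=> p; rewrite mem_filter => /andP [hp ps]; by split; [apply: hs|].
have e2 : \sum_(p <- [seq p <- s | ev p != m]) vec p =
   \sum_(p <- s) vec p - \sum_(p <- s | ev p == m) vec p.
  by rewrite big_filter [in RHS](bigID (fun p => ev p == m)) /= [RHS]addrC addKr.
rewrite e2 (linB hH) hv scalerBr; congr (_ - _).
rewrite (big_morph H (linD hH) (lin0 hH)) scaler_sumr [LHS]big_seq_cond [RHS]big_seq_cond.
apply: eq_bigr => p /andP [ps /eqP hp].
by rewrite hs // hp.
Qed.
End Eig.

Section Abs.
Variables (C : numClosedFieldType) (n : nat) (q : C) (R : 'I_n -> 'I_n -> 'I_n -> 'I_n -> C).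
Variables (A : algType C) (x dx : 'I_n -> A).
Hypotheses (hq0 : q != 0) (hq2 : q ^+ 2 != 1) (HO : is_Omega R q x dx).
Variables (H1 H2 Xp Xm Ta Tb Tc Td TK TKi : A -> A).
Hypotheses (lH1 : linear H1) (lH2 : linear H2) (lXp : linear Xp) (lXm : linear Xm).
Hypotheses (aTa : alg_hom Ta) (aTb : alg_hom Tb) (aTc : alg_hom Tc) (aTd : alg_hom Td)
  (aTK : alg_hom TK) (aTKi : alg_hom TKi).
Hypotheses (gTa : forall i, Ta (x i) = fa q 2 0 *: x i /\ Ta (dx i) = fa q 0 2 *: dx i)
  (gTb : forall i, Tb (x i) = fb q 2 0 *: x i /\ Tb (dx i) = fb q 0 2 *: dx i)
  (gTc : forall i, Tc (x i) = fc q 2 0 *: x i /\ Tc (dx i) = fc q 0 2 *: dx i)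
  (gTd : forall i, Td (x i) = fd q 2 0 *: x i /\ Td (dx i) = fd q 0 2 *: dx i)
  (gTK : forall i, TK (x i) = fK q 2 0 *: x i /\ TK (dx i) = fK q 0 2 *: dx i)
  (gTKi : forall i, TKi (x i) = fKi q 2 0 *: x i /\ TKi (dx i) = fKi q 0 2 *: dx i).
Hypotheses (dH1 : forall u w, H1 (u * w) = H1 u * w + u * H1 w)
  (dH2 : forall u w, H2 (u * w) = H2 u * w + u * H2 w)
  (dXp : forall u w, Xp (u * w) = Xp u * Ta w + Tb u * Xp w)
  (dXm : forall u w, Xm (u * w) = Xm u * Tc w + Td u * Xm w).
Hypotheses (gH1 : forall i, H1 (x i) = 2%:R *: x i /\ H1 (dx i) = 0)
  (gH2 : forall i, H2 (x i) = 0 /\ H2 (dx i) = 2%:R *: dx i)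
  (gXp : forall i, Xp (x i) = q^-1 *: dx i /\ Xp (dx i) = 0)
  (gXm : forall i, Xm (x i) = 0 /\ Xm (dx i) = q *: x i).

Definition G0 (v : A) (k l : int) : Prop :=
  weight H1 H2 v k l /\ Ta v = fa q k l *: v /\ Tb v = fb q k l *: v /\ Tc v = fc q k l *: v /\
      Td v = fd q k l *: v /\ TK v = fK q k l *: v /\ TKi v = fKi q k l *: v.
Definition cc : C := (q - q^-1)^-1.
Definition G (v : A) (k l : int) : Prop :=
  G0 v k l /\ G0 (Xp v) (k - 2) (l + 2) /\ G0 (Xm v) (k + 2) (l - 2) /\
      Xp (Xp v) = 0 /\ Xm (Xm v) = 0 /\
      Xm (Xp v) - Xp (Xm v) = (cc * (fK q k l - fKi q k l)) *: v.

Lemma G0_eq v k l k' l' : k = k' -> l = l' -> G0 v k l -> G0 v k' l'.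
Proof. by move=> -> ->. Qed.
Lemma G0_0 k l : G0 0 k l.
Proof.
by rewrite /G0 /weight !scaler0 (ah0 aTa) (ah0 aTb) (ah0 aTc) (ah0 aTd) (ah0 aTK) (ah0 aTKi)
  (lin0 lH1) (lin0 lH2).
Qed.
Lemma G0_D u w k l : G0 u k l -> G0 w k l -> G0 (u + w) k l.
Proof.
move=> [[h1 h2] [a [b [c [d [e f]]]]]] [[h1' h2'] [a' [b' [c' [d' [e' f']]]]]].
split; [split|do 6?split].
all: rewrite ?(linD lH1) ?(linD lH2) ?(ahD aTa) ?(ahD aTb) ?(ahD aTc) ?(ahD aTd) ?(ahD aTK) ?(ahD aTKi).
all: by rewrite ?scalerDr; congr (_ + _); auto.
Qed.
Lemma G0_Z c u k l : G0 u k l -> G0 (c *: u) k l.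
Proof.
move=> [[h1 h2] [a [b [d [e [f g]]]]]].
split; [split|do 6?split].
all: rewrite ?(linZ lH1) ?(linZ lH2) ?(ahZ aTa) ?(ahZ aTb) ?(ahZ aTc) ?(ahZ aTd) ?(ahZ aTK) ?(ahZ aTKi).
all: by rewrite ?h1 ?h2 ?a ?b ?d ?e ?f ?g !scalerA mulrC.
Qed.
Lemma G0_M u w k l k' l' : G0 u k l -> G0 w k' l' -> G0 (u * w) (k + k') (l + l').
Proof.
move=> [[h1 h2] [a [b [c [d [e f]]]]]] [[h1' h2'] [a' [b' [c' [d' [e' f']]]]]].
split; [split|do 6?split].
- by rewrite dH1 h1 h1' -scalerAl -scalerAr -scalerDl intrD.
- by rewrite dH2 h2 h2' -scalerAl -scalerAr -scalerDl intrD.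
- by rewrite (ahM aTa) a a' scalerMM (fa_mul hq0).
- by rewrite (ahM aTb) b b' scalerMM (fb_mul hq0).
- by rewrite (ahM aTc) c c' scalerMM (fc_mul hq0).
- by rewrite (ahM aTd) d d' scalerMM (fd_mul hq0).
- by rewrite (ahM aTK) e e' scalerMM (fK_mul hq0).
- by rewrite (ahM aTKi) f f' scalerMM (fKi_mul hq0).
Qed.
Lemma qq_neq0 : q - q^-1 != 0.
Proof.
apply: contra hq2 => /eqP /subr0_eq h.
by rewrite expr2 {2}h mulfV.
Qed.
Lemma cc_q : cc * (q - q^-1) = 1.
Proof. by rewrite /cc mulVf // qq_neq0. Qed.
Lemma int2 : ((2 : int)%:~R : C) = 2%:R. Proof. by []. Qed.
Lemma G0x i : G0 (x i) 2 0.
Proof.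
have [h1 _] := gH1 i; have [h2 _] := gH2 i.
split; first by rewrite /weight h1 h2 int2 scale0r.
by rewrite (gTa i).1 (gTb i).1 (gTc i).1 (gTd i).1 (gTK i).1 (gTKi i).1.
Qed.
Lemma G0dx i : G0 (dx i) 0 2.
Proof.
have [_ h1] := gH1 i; have [_ h2] := gH2 i.
split; first by rewrite /weight h1 h2 int2 scale0r.
by rewrite (gTa i).2 (gTb i).2 (gTc i).2 (gTd i).2 (gTK i).2 (gTKi i).2.
Qed.
Lemma G_x i : G (x i) 2 0.
Proof.
split; [|split; [|split; [|split; [|split]]]].
- exact: G0x.
- by rewrite (gXp i).1; apply: G0_Z; apply: G0_eq (G0dx i).
- by rewrite (gXm i).1; apply: G0_0.
- by rewrite (gXp i).1 (linZ lXp) (gXp i).2 scaler0.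
- by rewrite (gXm i).1 (lin0 lXm).
- rewrite (gXp i).1 (gXm i).1 (linZ lXm) (gXm i).2 (lin0 lXp) subr0 scalerA mulVf //.
  by rewrite fK20 fKi20 cc_q scale1r.
Qed.
Lemma G_dx i : G (dx i) 0 2.
Proof.
split; [|split; [|split; [|split; [|split]]]].
- exact: G0dx.
- by rewrite (gXp i).2; apply: G0_0.
- by rewrite (gXm i).2; apply: G0_Z; apply: G0_eq (G0x i).
- by rewrite (gXp i).2 (lin0 lXp).
- by rewrite (gXm i).2 (linZ lXm) (gXm i).1 scaler0.
- rewrite (gXp i).2 (gXm i).2 (linZ lXp) (gXp i).1 (lin0 lXm) sub0r scalerA mulfV //.
  rewrite fK02 fKi02 -scaleNr; congr (_ *: _).
  by rewrite -opprD mulrN cc_q.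
Qed.
Lemma self_add (a : A) : a = a + a -> a = 0.
Proof. move=> h; have: a + a - a = a - a by rewrite -h. by rewrite addrK subrr. Qed.
Lemma G_1 : G 1 0 0.
Proof.
have h1 : H1 1 = 0 by apply: self_add; have := dH1 1 1; rewrite !mulr1 !mul1r.
have h2 : H2 1 = 0 by apply: self_add; have := dH2 1 1; rewrite !mulr1 !mul1r.
have xp : Xp 1 = 0.
  by apply: self_add; have := dXp 1 1; rewrite (ah1 aTa) (ah1 aTb) !mulr1 !mul1r.
have xm : Xm 1 = 0.
  by apply: self_add; have := dXm 1 1; rewrite (ah1 aTc) (ah1 aTd) !mulr1 !mul1r.
split; [|split; [|split; [|split; [|split]]]].
- split; first by rewrite /weight h1 h2 !scale0r.
  by rewrite (ah1 aTa) (ah1 aTb) (ah1 aTc) (ah1 aTd) (ah1 aTK) (ah1 aTKi)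
    fa00 fb00 fc00 fd00 fK00 fKi00 !scale1r.
- rewrite xp; exact: G0_0.
- rewrite xm; exact: G0_0.
- by rewrite xp (lin0 lXp).
- by rewrite xm (lin0 lXm).
- by rewrite xp xm (lin0 lXp) (lin0 lXm) subrr fK00 fKi00 subrr mulr0 scale0r.
Qed.
Lemma G_0 k l : G 0 k l.
Proof.
split; [|split; [|split; [|split; [|split]]]].
- exact: G0_0.
- rewrite (lin0 lXp); exact: G0_0.
- rewrite (lin0 lXm); exact: G0_0.
- by rewrite !(lin0 lXp).
- by rewrite !(lin0 lXm).
- by rewrite !(lin0 lXp, lin0 lXm) subrr scaler0.
Qed.
Lemma G_D u w k l : G u k l -> G w k l -> G (u + w) k l.
Proof.
move=> [a [b [c [d [e f]]]]] [a' [b' [c' [d' [e' f']]]]].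
split; [|split; [|split; [|split; [|split]]]].
- exact: G0_D.
- rewrite (linD lXp); exact: G0_D.
- rewrite (linD lXm); exact: G0_D.
- by rewrite !(linD lXp) d d' addr0.
- by rewrite !(linD lXm) e e' addr0.
- by rewrite !(linD lXp, linD lXm) opprD addrACA f f' scalerDr.
Qed.
Lemma G_Z c u k l : G u k l -> G (c *: u) k l.
Proof.
move=> [a [b [d [e [f g]]]]].
split; [|split; [|split; [|split; [|split]]]].
- exact: G0_Z.
- rewrite (linZ lXp); exact: G0_Z.
- rewrite (linZ lXm); exact: G0_Z.
- by rewrite !(linZ lXp) e scaler0.
- by rewrite !(linZ lXm) f scaler0.
- by rewrite !(linZ lXp, linZ lXm) -scalerBr g !scalerA mulrC.
Qed.
Lemma G_M u w k l k' l' : G u k l -> G w k' l' -> G (u * w) (k + k') (l + l').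
Proof.
move=> [gu [gpu [gmu [ppu [mmu cu]]]]] [gw [gpw [gmw [ppw [mmw cw]]]]].
have [_ [tau [tbu [tcu [tdu _]]]]] := gu.
have [_ [taw [tbw [tcw [tdw _]]]]] := gw.
have [_ [tapu [tbpu [tcpu [tdpu _]]]]] := gpu.
have [_ [tapw [tbpw [tcpw [tdpw _]]]]] := gpw.
have [_ [tamu [tbmu [tcmu [tdmu _]]]]] := gmu.
have [_ [tamw [tbmw [tcmw [tdmw _]]]]] := gmw.
split; [|split; [|split; [|split; [|split]]]].
- exact: G0_M.
- rewrite dXp taw tbu -scalerAr -scalerAl; apply: G0_D; apply: G0_Z.
    by apply: G0_eq (G0_M gpu gw); ring.
  by apply: G0_eq (G0_M gu gpw); ring.
- rewrite dXm tcw tdu -scalerAr -scalerAl; apply: G0_D; apply: G0_Z.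
    by apply: G0_eq (G0_M gmu gw); ring.
  by apply: G0_eq (G0_M gu gmw); ring.
- rewrite dXp taw tbu (linD lXp) !dXp ppu ppw mul0r mulr0 add0r addr0.
  rewrite (linZ lXp) (linZ lXp) tbpu tapw !scalerMM -scalerDl.
  rewrite (fb_mul hq0) (fa_mul hq0) fbM2 faM2.
  have -> : fb q k l * - q^-1 * fa q k' l' + fb q k l * (fa q k' l' * q^-1) = 0 by ring.
  by rewrite scale0r.
- rewrite dXm tcw tdu (linD lXm) !dXm mmu mmw mul0r mulr0 add0r addr0.
  rewrite (linZ lXm) (linZ lXm) tdmu tcmw !scalerMM -scalerDl.
  rewrite (fd_mul hq0) (fc_mul hq0) fd2M fc2M.
  have -> : fd q k l * q^-1 * fc q k' l' + fd q k l * (fc q k' l' * - q^-1) = 0 by ring.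
  by rewrite scale0r.
have cu' : Xm (Xp u) = Xp (Xm u) + (cc * (fK q k l - fKi q k l)) *: u by rewrite -cu addrC subrK.
have cw' : Xm (Xp w) = Xp (Xm w) + (cc * (fK q k' l' - fKi q k' l')) *: w by rewrite -cw addrC subrK.
rewrite dXp dXm taw tbu tcw tdu (linD lXm) (linD lXp) !dXm !dXp.
rewrite (ahZ aTc) (ahZ aTd) (ahZ aTa) (ahZ aTb) !(linZ lXm) !(linZ lXp).
rewrite tcw tdu taw tbu tdpu tcpw tbmu tamw cu' cw'.
rewrite (fd_mul hq0) (fc_mul hq0) (fb_mul hq0) (fa_mul hq0) (fK_mul hq0) (fKi_mul hq0).
rewrite fdM2 fcM2 fb2M fa2M.
rewrite -!(fac hq0) -!fbd.
rewrite !mulrDl !mulrDr -!scalerAl -!scalerAr !scalerA.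
set a1 := Xp (Xm u) * w; set a5 := u * Xp (Xm w); set a2 := u * w.
set a3 := Xp u * Xm w; set a4 := Xm u * Xp w.
lc5solve a1 a2 a3 a4 a5; ring.
Qed.
Definition Pdec (v : A) := exists s : seq (A * (int * int)),
  v = \sum_(p <- s) p.1 /\ forall p, p \in s -> G p.1 p.2.1 p.2.2.
Lemma all_dec v : Pdec v.
Proof.
apply: (Omega_ind _ _ _ _ _ _ _ HO).
- exists [:: (1, (0, 0))]; rewrite big_seq1; split => // p; rewrite inE => /eqP ->; exact: G_1.
- by exists [::]; rewrite big_nil.
- move=> u w [s1 [-> h1]] [s2 [-> h2]]; exists (s1 ++ s2); rewrite big_cat; split => // p.
  by rewrite mem_cat => /orP [/h1|/h2].
- move=> c u [s1 [-> h1]]; exists [seq (c *: p.1, p.2) | p <- s1]; rewrite big_map scaler_sumr.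
  split => // p /mapP [p' /h1 hp' ->] /=; exact: G_Z.
- move=> u w [s1 [-> h1]] [s2 [-> h2]].
  exists [seq (p.1 * r.1, (p.2.1 + r.2.1, p.2.2 + r.2.2)) | p <- s1, r <- s2].
  rewrite big_allpairs_dep mulr_suml; split.
    by apply: eq_bigr => p _; rewrite mulr_sumr.
  move=> t /allpairsP [[p r] [/= ps rs ->]] /=; apply: G_M; [exact: h1|exact: h2].
- move=> i; exists [:: (x i, (2, 0))]; rewrite big_seq1; split => // p.
  rewrite inE => /eqP ->; exact: G_x.
- move=> i; exists [:: (dx i, (0, 2))]; rewrite big_seq1; split => // p.
  rewrite inE => /eqP ->; exact: G_dx.
Qed.
Lemma funop_gen (T : A -> A) (f : int -> int -> C) : linear T ->
  (forall v k l, G v k l -> T v = f k l *: v) -> funop H1 H2 f T.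
Proof.
move=> lT hT; split => // v m1 m2 [w1 w2].
have [s [ev hs]] := all_dec v.
have E1 : \sum_(p <- s) p.1 = \sum_(p <- s | (p.2.1)%:~R == (m1%:~R : C)) p.1.
  apply: (eig_filter lH1 (ev := fun p : A * (int * int) => (p.2.1)%:~R)).
    by move=> p /hs [[[]]].
  by rewrite -ev.
rewrite -[X in _ = X]big_filter in E1.
set s1 := [seq _ <- s | _] in E1.
have E2 : \sum_(p <- s1) p.1 = \sum_(p <- s1 | (p.2.2)%:~R == (m2%:~R : C)) p.1.
  apply: (eig_filter lH2 (ev := fun p : A * (int * int) => (p.2.2)%:~R)).
    by move=> p; rewrite mem_filter => /andP [_ /hs [[[]]]].
  by rewrite -E1 -ev.
rewrite ev E1 E2 (big_morph T (linD lT) (lin0 lT)) scaler_sumr.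
rewrite big_seq_cond [RHS]big_seq_cond; apply: eq_bigr => p /andP [].
rewrite mem_filter => /andP [h1 ps] h2.
move: h1 h2; rewrite !eqr_int => /eqP <- /eqP <-.
by case: (hs p ps) => g _; apply: hT (hs p ps).
Qed.
Lemma rel_gen (F1 F2 : A -> A) : linear F1 -> linear F2 ->
  (forall v k l, G v k l -> F1 v = F2 v) -> forall v, F1 v = F2 v.
Proof.
move=> l1 l2 h v; have [s [-> hs]] := all_dec v.
rewrite (lin_sum l1) (lin_sum l2) big_seq [RHS]big_seq; apply: eq_bigr => p ps.
exact: h (hs p ps).
Qed.
Lemma lin_comp (F F' : A -> A) : linear F -> linear F' -> linear (fun v => F (F' v)).
Proof. by move=> l l' a u v; rewrite l' l. Qed.
Lemma lin_sub (F F' : A -> A) : linear F -> linear F' -> linear (fun v => F v - F' v).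
Proof.
move=> l l' a u v; rewrite l l' scalerBr opprD.
by rewrite -!addrA; congr (_ + _); rewrite addrCA.
Qed.
Lemma lin_scale (F : A -> A) (c : C) : linear F -> linear (fun v => c *: F v).
Proof. by move=> l a u v; rewrite l scalerDr !scalerA mulrC. Qed.
Lemma lin_zero : linear (fun _ : A => (0 : A)).
Proof. by move=> a u v; rewrite scaler0 addr0. Qed.
Lemma lin_alg (F : A -> A) : alg_hom F -> linear F.
Proof. by case. Qed.

Lemma cov : covariant_right_action q x dx H1 H2 Xp Xm.
Proof.
split; first by [].
  move=> v; have [s [ev hs]] := all_dec v; exists s; split => // p /hs [].
  by case.
exists Ta, Tb, Tc, Td, TK, TKi; split.
- split; [|split; [|split; [|split; [|split]]]].
  + apply: funop_gen (lin_alg aTa) _ => v k l [[_ [->]]] //.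
  + apply: funop_gen (lin_alg aTb) _ => v k l [[_ [_ [->]]]] //.
  + apply: funop_gen (lin_alg aTc) _ => v k l [[_ [_ [_ [->]]]]] //.
  + apply: funop_gen (lin_alg aTd) _ => v k l [[_ [_ [_ [_ [->]]]]]] //.
  + apply: funop_gen (lin_alg aTK) _ => v k l [[_ [_ [_ [_ [_ [->]]]]]]] //.
  + apply: funop_gen (lin_alg aTKi) _ => v k l [[_ [_ [_ [_ [_ [_ ->]]]]]]] //.
- move=> v; split; [|split; [|split; [|split; [|split; [|split; [|split]]]]]].
  + apply: (rel_gen (lin_comp lH2 lH1) (lin_comp lH1 lH2)) => {}v k l [[[h1 h2] _] _].
    by rewrite h1 h2 (linZ lH1) (linZ lH2) h1 h2 !scalerA mulrC.
  + apply: (rel_gen (lin_sub (lin_comp lXp lH1) (lin_comp lH1 lXp)) (lin_scale _ lXp)).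
    move=> {}v k l [[[h1 h2] _] [[[h1' _] _] _]].
    rewrite h1 h1' (linZ lXp) -scalerBl; congr (_ *: _); rewrite intrB int2; ring.
  + rewrite -scaleNr; apply: (rel_gen (lin_sub (lin_comp lXm lH1) (lin_comp lH1 lXm)) (lin_scale _ lXm)).
    move=> {}v k l [[[h1 h2] _] [_ [[[h1' _] _] _]]].
    rewrite h1 h1' (linZ lXm) -scalerBl; congr (_ *: _); rewrite intrD int2; ring.
  + rewrite -scaleNr; apply: (rel_gen (lin_sub (lin_comp lXp lH2) (lin_comp lH2 lXp)) (lin_scale _ lXp)).
    move=> {}v k l [[[h1 h2] _] [[[_ h2'] _] _]].
    rewrite h2 h2' (linZ lXp) -scalerBl; congr (_ *: _); rewrite intrD int2; ring.
  + apply: (rel_gen (lin_sub (lin_comp lXm lH2) (lin_comp lH2 lXm)) (lin_scale _ lXm)).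
    move=> {}v k l [[[h1 h2] _] [_ [[[_ h2'] _] _]]].
    rewrite h2 h2' (linZ lXm) -scalerBl; congr (_ *: _); rewrite intrB int2; ring.
  + apply: (rel_gen (lin_sub (lin_comp lXm lXp) (lin_comp lXp lXm))
                    (lin_scale _ (lin_sub (lin_alg aTK) (lin_alg aTKi)))).
    move=> {}v k l [[_ [_ [_ [_ [_ [hK hKi]]]]]] [_ [_ [_ [_ hc]]]]].
    by rewrite hc hK hKi -scalerBl scalerA.
  + apply: (rel_gen (lin_comp lXp lXp) lin_zero) => {}v k l [_ [_ [_ [h _]]]]; exact: h.
  + apply: (rel_gen (lin_comp lXm lXm) lin_zero) => {}v k l [_ [_ [_ [_ [h _]]]]]; exact: h.
- by move=> u w; split; rewrite ?dH1 ?dH2 ?dXp ?dXm.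
- move=> i; have [? ?] := gH1 i; have [? ?] := gH2 i; have [? ?] := gXp i; have [? ?] := gXm i.
  by do 7?split.
Qed.
End Abs.

Unset Implicit Arguments.
Theorem mainTheorem8 (C : numClosedFieldType) (n : nat) (q : C)
    (R : 'I_n -> 'I_n -> 'I_n -> 'I_n -> C) :
  q != 0 -> q ^+ 2 != 1 -> QYBE R -> Hecke R q ->
  forall (A : algType C) (x dx : 'I_n -> A), is_Omega R q x dx ->
  exists H1 H2 Xp Xm : A -> A, covariant_right_action q x dx H1 H2 Xp Xm.
Proof.
move=> hq0 hq2 _ Hk A x dx HO.
have rel := HO.1.
have [Ta [aTa gTa]] := scal_hom HO (fa q 2 0) (fa q 0 2).
have [Tb [aTb gTb]] := scal_hom HO (fb q 2 0) (fb q 0 2).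
have [Tc [aTc gTc]] := scal_hom HO (fc q 2 0) (fc q 0 2).
have [Td [aTd gTd]] := scal_hom HO (fd q 2 0) (fd q 0 2).
have [TK [aTK gTK]] := scal_hom HO (fK q 2 0) (fK q 0 2).
have [TKi [aTKi gTKi]] := scal_hom HO (fKi q 2 0) (fKi q 0 2).
have hid : forall i, (fun u : A => u) (x i) = 1 *: x i /\ (fun u : A => u) (dx i) = 1 *: dx i.
  by move=> i; rewrite !scale1r.
have [H1 [lH1 [dH1 gH1]]] := twisted HO (id_alg A) (id_alg A) hid hid
  (eH1 rel 2%:R 0) (eH2 rel 2%:R 0) (eH3 rel 2%:R 0).
have [H2 [lH2 [dH2 gH2]]] := twisted HO (id_alg A) (id_alg A) hid hid
  (eH1 rel 0 2%:R) (eH2 rel 0 2%:R) (eH3 rel 0 2%:R).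
have gTa' := gTa; rewrite fa20 fa02 in gTa'.
have gTb' := gTb; rewrite fb20 fb02 in gTb'.
have gTc' := gTc; rewrite fc20 fc02 in gTc'.
have gTd' := gTd; rewrite fd20 fd02 in gTd'.
have [Xp [lXp [dXp gXp]]] := twisted HO aTb aTa gTb' gTa'
  (eXp1 hq0 Hk rel) (eXp2 hq0 rel) (eXp3 q R dx).
have [Xm [lXm [dXm gXm]]] := twisted HO aTd aTc gTd' gTc'
  (eXm1 q R x) (eXm2 hq0 rel) (eXm3 hq0 Hk rel).
exists H1, H2, Xp, Xm.
apply: (cov hq0 hq2 HO lH1 lH2 lXp lXm aTa aTb aTc aTd aTK aTKi gTa gTb gTc gTd gTK gTKi).
- exact: dH1.
- exact: dH2.
- exact: dXp.
- exact: dXm.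
- by move=> i; have [-> ->] := gH1 i; rewrite scale0r.
- by move=> i; have [-> ->] := gH2 i; rewrite scale0r.
- exact: gXp.
- exact: gXm.
Qed.
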